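(* Let $f(X)=\frac12\langle X,\mathcal A(X)\rangle-\langle B^\star,X\rangle$ where $\mathcal A$ is a symmetric positive semidefinite linear operator on $\mathbb{R}^{m\times n}$, $B^\star=\mathcal A(M^\star)$ and $M^\star\in\mathcal M_k$. Suppose Assumption RPD$(M^\star,\beta)$ holds with $0\le\beta<1$. Then the Riemannian Hessian of $f$ at $M^\star$ (with $\mathcal M_k$ viewed as a Riemannian submanifold of $\mathbb{R}^{m\times n}$ with the Frobenius inner product, so that $\langle\operatorname{Hess}f(M^\star)[Z],Z\rangle=\frac{d^2}{dt^2}f(\operatorname{Exp}_{M^\star}(tZ))|_{t=0}$ for the exponential map $\operatorname{Exp}$) is positive definite: $$\min_{0\ne W\in T_{M^\star}\mathcal M_k}\frac{\langle\operatorname{Hess}f(M^\star)[W],W\rangle}{\|W\|_F^2}\ge 1-\beta>0.$$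
   Context: $\mathcal M_k$ is the set of real $m\times n$ matrices of rank exactly $k$, a smooth manifold; $\langle A,B\rangle=\operatorname{tr}(A^TB)$. Assumption RPD$(M^\star,\beta)$: $(1-\beta)\|X-M^\star\|_F^2\le\langle X-M^\star,\mathcal A(X-M^\star)\rangle\le(1+\beta)\|X-M^\star\|_F^2$ for all $X\in\mathcal M_k$. *)

(* Defs.v *)
From HB Require Import structures.
From mathcomp Require Import all_boot all_order all_algebra.
From mathcomp Require Import all_classical all_reals all_analysis.
Set Implicit Arguments. Unset Strict Implicit. Unset Printing Implicit Defensive.
Import Order.TTheory GRing.Theory Num.Theory.
Local Open Scope ring_scope.

Definition frob (R : realType) (m n : nat) (A B : 'M[R]_(m, n)) : R :=
  \tr (A^T *m B).

Definition rankk (R : realType) (m n k : nat) (X : 'M[R]_(m, n)) : Prop :=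
  \rank X = k.

Definition mxderivable (R : realType) (m n : nat) (g : R -> 'M[R]_(m, n)) (t : R) : Prop :=
  forall i j, derivable (fun s => g s i j) t 1.

Definition mxderive (R : realType) (m n : nat) (g : R -> 'M[R]_(m, n)) (t : R) : 'M[R]_(m, n) :=
  \matrix_(i, j) (derive1 (fun s => g s i j) t).

Definition tangent (R : realType) (m n k : nat) (M W : 'M[R]_(m, n)) : Prop :=
  exists (g : R -> 'M[R]_(m, n)) (eps : R), 0 < eps /\
    (forall t, `|t| < eps -> rankk k (g t)) /\ g 0 = M /\
    mxderivable g 0 /\ mxderive g 0 = W.

(* Geodesic of M_k as a Riemannian submanifold of (R^{m x n}, Frobenius):
   a twice differentiable curve in M_k whose acceleration is normal to the
   tangent space at every point. *)
Definition geodesic (R : realType) (m n k : nat) (g : R -> 'M[R]_(m, n)) (eps : R) : Prop :=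
  0 < eps /\
  forall t, `|t| < eps ->
    [/\ rankk k (g t), mxderivable g t, mxderivable (mxderive g) t &
        forall Z, tangent k (g t) Z -> frob (mxderive (mxderive g) t) Z = 0].

Definition linear_op (R : realType) (m n : nat) (A : 'M[R]_(m, n) -> 'M[R]_(m, n)) : Prop :=
  forall (a : R) X Y, A (a *: X + Y) = a *: A X + A Y.

Definition symmetric_op (R : realType) (m n : nat) (A : 'M[R]_(m, n) -> 'M[R]_(m, n)) : Prop :=
  forall X Y, frob X (A Y) = frob (A X) Y.

Definition psd_op (R : realType) (m n : nat) (A : 'M[R]_(m, n) -> 'M[R]_(m, n)) : Prop :=
  forall X, 0 <= frob X (A X).

Definition RPD (R : realType) (m n k : nat) (A : 'M[R]_(m, n) -> 'M[R]_(m, n))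
  (Ms : 'M[R]_(m, n)) (beta : R) : Prop :=
  forall X, rankk k X ->
    (1 - beta) * frob (X - Ms) (X - Ms) <= frob (X - Ms) (A (X - Ms)) /\
    frob (X - Ms) (A (X - Ms)) <= (1 + beta) * frob (X - Ms) (X - Ms).

Definition fobj (R : realType) (m n : nat) (A : 'M[R]_(m, n) -> 'M[R]_(m, n))
  (Bs X : 'M[R]_(m, n)) : R :=
  2^-1 * frob X (A X) - frob Bs X.

(* Main.v *)
Require Import Defs.
From HB Require Import structures.
From mathcomp Require Import all_boot all_order all_algebra.
From mathcomp Require Import all_classical all_reals all_analysis.
From mathcomp Require Import lra ring.
Import Order.TTheory GRing.Theory Num.Theory.
Import numFieldNormedType.Exports.
Set Implicit Arguments. Unset Strict Implicit.
Local Open Scope ring_scope.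
Local Open Scope classical_set_scope.

Section S.
Variable R : realType.

Lemma is_derive_sumf n (F : 'I_n -> R -> R) (x : R) (dF : 'I_n -> R) :
  (forall i, is_derive x 1 (F i) (dF i)) ->
  is_derive x 1 (fun s => \sum_(i < n) F i s) (\sum_(i < n) dF i).
Proof. by move=> H; rewrite -fct_sumE; apply: is_derive_sum. Qed.

Lemma is_deriveMf (f g : R -> R) (x df dg : R) :
  is_derive x 1 f df -> is_derive x 1 g dg ->
  is_derive x 1 (fun s => f s * g s) (df * g x + f x * dg).
Proof.
move=> H1 H2; have [H3 H4] := is_deriveM H1 H2.
split; first exact: H3.
by rewrite H4 /GRing.scale /= addrC mulrC.
Qed.

Lemma frobE m n (X Y : 'M[R]_(m, n)) :
  frob X Y = \sum_(i < n) \sum_(j < m) X j i * Y j i.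
Proof.
rewrite /frob /mxtrace; apply: eq_bigr => i _; rewrite mxE.
by apply: eq_bigr => j _; rewrite mxE.
Qed.

Lemma frobC m n (X Y : 'M[R]_(m, n)) : frob X Y = frob Y X.
Proof. by rewrite !frobE; apply: eq_bigr => i _; apply: eq_bigr => j _; rewrite mulrC. Qed.

Lemma frobDr m n (X Y Z : 'M[R]_(m, n)) : frob X (Y + Z) = frob X Y + frob X Z.
Proof.
rewrite !frobE -big_split; apply: eq_bigr => i _; rewrite -big_split.
by apply: eq_bigr => j _; rewrite mxE mulrDr.
Qed.

Lemma frobZr m n (a : R) (X Y : 'M[R]_(m, n)) : frob X (a *: Y) = a * frob X Y.
Proof.
rewrite !frobE mulr_sumr; apply: eq_bigr => i _; rewrite mulr_sumr.
by apply: eq_bigr => j _; rewrite mxE mulrCA.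
Qed.

Lemma frobNr m n (X Y : 'M[R]_(m, n)) : frob X (- Y) = - frob X Y.
Proof. by rewrite -scaleN1r frobZr mulN1r. Qed.

Lemma frobBr m n (X Y Z : 'M[R]_(m, n)) : frob X (Y - Z) = frob X Y - frob X Z.
Proof. by rewrite frobDr frobNr. Qed.

Lemma frob_derive m n (u v : R -> 'M[R]_(m, n)) (t : R) (du dv : 'M[R]_(m, n)) :
  (forall i j, is_derive t 1 (fun s => u s i j) (du i j)) ->
  (forall i j, is_derive t 1 (fun s => v s i j) (dv i j)) ->
  is_derive t 1 (fun s => frob (u s) (v s)) (frob du (v t) + frob (u t) dv).
Proof.
move=> Hu Hv.
have -> : (fun s => frob (u s) (v s)) =
   (fun s => \sum_(i < n) \sum_(j < m) u s j i * v s j i).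
  by apply/funext => s; rewrite frobE.
apply: is_derive_eq.
  by apply: is_derive_sumf => i; apply: is_derive_sumf.
apply/esym; rewrite !frobE -big_split; apply: eq_bigr => i _ /=; rewrite -big_split.
apply: eq_bigr => j _; change (du j i * v t j i + u t j i * dv j i = u t j i * dv j i + v t j i * du j i); by rewrite addrC (mulrC (du j i)). Qed.


Section Op.
Variables (m n : nat) (A : 'M[R]_(m, n) -> 'M[R]_(m, n)).
Hypothesis hA : linear_op A.

Lemma A0 : A 0 = 0.
Proof.
have := hA 1 0 0; rewrite !scale1r addr0 => h.
by apply: (@addrI _ (A 0)); rewrite addr0 -h.
Qed.

Lemma AD X Y : A (X + Y) = A X + A Y.
Proof. by have := hA 1 X Y; rewrite !scale1r. Qed.

Lemma AZ a X : A (a *: X) = a *: A X.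
Proof. by have := hA a X 0; rewrite !addr0 A0 addr0. Qed.

Lemma Asum I (r : seq I) (F : I -> 'M[R]_(m, n)) :
  A (\sum_(i <- r) F i) = \sum_(i <- r) A (F i).
Proof. exact: (big_morph A AD A0). Qed.

Lemma AE X i j :
  A X i j = \sum_(k < m) \sum_(l < n) X k l * A (delta_mx k l) i j.
Proof.
rewrite {1}(matrix_sum_delta X) Asum summxE; apply: eq_bigr => k _.
rewrite Asum summxE; apply: eq_bigr => l _.
by rewrite AZ mxE.
Qed.

Lemma A_derive (v : R -> 'M[R]_(m, n)) (t : R) (dv : 'M[R]_(m, n)) :
  (forall i j, is_derive t 1 (fun s => v s i j) (dv i j)) ->
  forall i j, is_derive t 1 (fun s => A (v s) i j) (A dv i j).
Proof.
move=> Hv i j.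
have -> : (fun s => A (v s) i j) =
   (fun s => \sum_(k < m) \sum_(l < n) v s k l * A (delta_mx k l) i j).
  by apply/funext => s; rewrite AE.
apply: is_derive_eq.
  by apply: is_derive_sumf => k; apply: is_derive_sumf.
rewrite AE; apply/esym; apply: eq_bigr => k _; apply: eq_bigr => l _.
change (dv k l * A (delta_mx k l) i j = v t k l * 0 + A (delta_mx k l) i j * dv k l).
by rewrite mulr0 add0r mulrC.
Qed.

End Op.
Lemma scalarS (psi dpsi : R -> R) (eps c : R) : 0 < eps ->
 (forall t : R, `|t| < eps -> is_derive t 1 psi (dpsi t)) -> dpsi 0 = 0 ->
 is_derive (0:R) 1 dpsi c ->
 (forall t, `|t| < eps -> psi 0 <= psi t) -> 0 <= c.
Proof.
move=> e0 Hd d0 [dd dv] Hmin.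
rewrite leNgt; apply/negP => c0.
have Hc := cvg_toP dd dv.
have c2 : c < c / 2 by lra.
have H := cvgr_lt c Hc (c/2) c2.
have F0 : Filter (0:R)^' by apply: dnbhs_filter.
move: (H F0). rewrite /dnbhs /within /= => /nbhs_ballP [d d0' Hb].
have dpos : 0 < d := d0'.
have md0 : 0 < Num.min d eps.
  by rewrite lt_min; apply/andP.
set t := Num.min d eps / 2.
have t0 : 0 < t by rewrite /t divr_gt0.
have tmin : t < Num.min d eps by rewrite /t; lra.
have td : t < d by apply: (lt_le_trans tmin); rewrite ge_min lexx.
have te : t < eps by apply: (lt_le_trans tmin); rewrite ge_min lexx orbT.
have neg s : 0 < s < t -> dpsi s < 0.
  case/andP => s0 st.
  have bs : ball (0:R) d s.
    rewrite -ball_normE /= sub0r normrN gtr0_norm //.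
    exact: lt_trans td.
  have := Hb s bs (lt0r_neq0 s0).
  rewrite d0 subr0 /GRing.scale /= mulr1 addr0 => hs.
  have : s^-1 * dpsi s < 0 by apply: (lt_trans hs); lra.
  by rewrite pmulr_rlt0 // invr_gt0.
have [xi xiI Hxi] : exists2 xi, xi \in `]0, t[%R & psi t - psi 0 = dpsi xi * (t - 0).
  apply: MVT => //.
    move=> x; rewrite in_itv /= => /andP [x0 xt]; apply: Hd.
    by rewrite gtr0_norm // (lt_trans xt).
  apply: derivable_within_continuous => x; rewrite in_itv /= => /andP [x0 xt].
  have hx : `|x| < eps by rewrite ger0_norm // (le_lt_trans xt).
  by case: (Hd x hx).
have := Hmin t; rewrite gtr0_norm // => /(_ te).
rewrite -subr_ge0 Hxi subr0 leNgt => /negP; apply.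
by rewrite pmulr_llt0 //; apply: neg; move: xiI; rewrite in_itv.
Qed.

Lemma is_deriveDf (f g : R -> R) (x df dg : R) :
  is_derive x 1 f df -> is_derive x 1 g dg ->
  is_derive x 1 (fun s => f s + g s) (df + dg).
Proof.
move=> H1 H2; have [H3 H4] := is_deriveD H1 H2.
by split; [exact: H3 | rewrite H4].
Qed.

Lemma is_deriveBf (f g : R -> R) (x df dg : R) :
  is_derive x 1 f df -> is_derive x 1 g dg ->
  is_derive x 1 (fun s => f s - g s) (df - dg).
Proof.
move=> H1 H2; have [H3 H4] := is_deriveB H1 H2.
by split; [exact: H3 | rewrite H4].
Qed.

Lemma is_deriveCf (f : R -> R) (x a df : R) :
  is_derive x 1 f df -> is_derive x 1 (fun s => a * f s) (a * df).
Proof.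
move=> H; have := is_deriveMf (is_derive_cst a x 1) H.
by rewrite mul0r add0r.
Qed.

Lemma frob0l m n (X : 'M[R]_(m, n)) : frob 0 X = 0.
Proof. by rewrite frobE big1 // => i _; rewrite big1 // => j _; rewrite mxE mul0r. Qed.

Lemma frobBl m n (X Y Z : 'M[R]_(m, n)) : frob (X - Y) Z = frob X Z - frob Y Z.
Proof. by rewrite frobC frobBr (frobC Z) (frobC Z). Qed.

Lemma mx_is_derive m n (g : R -> 'M[R]_(m, n)) (t : R) :
  mxderivable g t -> forall i j, is_derive t 1 (fun s => g s i j) (mxderive g t i j).
Proof. by move=> H i j; rewrite mxE derive1E; apply: derivableP; apply: H. Qed.

Lemma cst_is_derive m n (M : 'M[R]_(m, n)) (t : R) :
  forall i j, is_derive t 1 (fun s : R => (fun _ => M) s i j) ((0 : 'M[R]_(m, n)) i j).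
Proof. by move=> i j; rewrite mxE; apply: is_derive_cst. Qed.

Definition H1 m n (A : 'M[R]_(m, n) -> 'M[R]_(m, n)) Ms (g : R -> 'M[R]_(m, n)) t :=
  2^-1 * (frob (mxderive g t) (A (g t)) + frob (g t) (A (mxderive g t))) -
  (frob 0 (g t) + frob (A Ms) (mxderive g t)).

Lemma h_derive m n (A : 'M[R]_(m, n) -> 'M[R]_(m, n)) (hA : linear_op A) Ms g t :
  mxderivable g t ->
  is_derive t 1 (fun s => fobj A (A Ms) (g s)) (H1 A Ms g t).
Proof.
move=> Hg; have Hg' := mx_is_derive Hg.
have h1 := frob_derive Hg' (A_derive hA Hg').
have h2 := frob_derive (cst_is_derive (A Ms) t) Hg'.
exact: (is_deriveBf (is_deriveCf (2^-1) h1) h2).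
Qed.

Lemma H1_0 m n (A : 'M[R]_(m, n) -> 'M[R]_(m, n)) (hS : symmetric_op A) Ms g :
  g 0 = Ms -> H1 A Ms g 0 = 0.
Proof.
move=> g0; rewrite /H1 g0 frob0l (frobC _ (A Ms)) -hS.
set x := frob _ _; lra.
Qed.

Lemma H1_derive m n (A : 'M[R]_(m, n) -> 'M[R]_(m, n)) (hA : linear_op A)
  (hS : symmetric_op A) (Ms : 'M[R]_(m, n)) (g : R -> 'M[R]_(m, n)) W :
  mxderivable g 0 -> mxderivable (mxderive g) 0 -> g 0 = Ms -> mxderive g 0 = W ->
  is_derive (0:R) 1 (H1 A Ms g) (frob W (A W)).
Proof.
move=> Hg Hg2 g0 gW.
have Hg' := mx_is_derive Hg; have Hg2' := mx_is_derive Hg2.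
have h1 := frob_derive Hg2' (A_derive hA Hg').
have h2 := frob_derive Hg' (A_derive hA Hg2').
have h3 := frob_derive (cst_is_derive 0 0) Hg'.
have h4 := frob_derive (cst_is_derive (A Ms) 0) Hg2'.
have := is_deriveBf (is_deriveCf (2^-1) (is_deriveDf h1 h2)) (is_deriveDf h3 h4).
case=> d v; split; first exact: d.
rewrite /H1 v g0 gW !frob0l (frobC _ (A Ms)) -hS.
set x := frob Ms _; set y := frob W (A W); lra.
Qed.


Lemma fobj_incr m n (A : 'M[R]_(m, n) -> 'M[R]_(m, n)) (hA : linear_op A)
  (hS : symmetric_op A) (Ms X : 'M[R]_(m, n)) :
  fobj A (A Ms) X - fobj A (A Ms) Ms = 2^-1 * frob (X - Ms) (A (X - Ms)).
Proof.
have AB : A (X - Ms) = A X - A Ms by rewrite AD // -scaleN1r AZ // scaleN1r.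
rewrite /fobj AB frobBl !frobBr -!hS (frobC X (A Ms)) -hS.
set a := frob X (A X); set b := frob Ms (A X); set e := frob Ms (A Ms); lra.
Qed.

End S.

Unset Implicit Arguments.

Theorem lemma4p5 (R : realType) (m n k : nat)
  (A : 'M[R]_(m, n) -> 'M[R]_(m, n)) (Ms : 'M[R]_(m, n)) (beta : R) :
  linear_op A -> symmetric_op A -> psd_op A ->
  rankk k Ms ->
  RPD k A Ms beta -> 0 <= beta -> beta < 1 ->
  0 < 1 - beta /\
  forall W : 'M[R]_(m, n), tangent k Ms W -> W != 0 ->
  forall (g : R -> 'M[R]_(m, n)) (eps : R),
    geodesic k g eps -> g 0 = Ms -> mxderive g 0 = W ->
    (1 - beta) * frob W W <=
      derive1 (derive1 (fun t => fobj A (A Ms) (g t))) 0.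
Proof.
move=> hA hS _ _ hRPD b0 b1; split; first lra.
move=> W _ _ g eps [e0 Hg] g0 gW.
pose A2 := fun X : 'M[R]_(m, n) => (1 - beta) *: X.
have hA2 : linear_op A2.
  by move=> a X Y; rewrite /A2 /= scalerDr !scalerA mulrC.
have hS2 : symmetric_op A2.
  move=> X Y; rewrite /A2 /= !frobE; apply: eq_bigr => i _; apply: eq_bigr => j _.
  by rewrite !mxE mulrCA mulrA.
have H0 : `|0 : R| < eps by rewrite normr0.
have [_ Hg0 Hg20 _] := Hg 0 H0.
have D1 := fun t ht => h_derive hA Ms (let: And4 _ x _ _ := Hg t ht in x).
have D2 := fun t ht => h_derive hA2 Ms (let: And4 _ x _ _ := Hg t ht in x).
have E1 := H1_derive hA hS Hg0 Hg20 g0 gW.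
have E2 := H1_derive hA2 hS2 Hg0 Hg20 g0 gW.
have -> : derive1 (derive1 (fun t => fobj A (A Ms) (g t))) 0 = frob W (A W).
  rewrite derive1E -(@derive_val _ _ _ _ _ _ _ E1).
  apply: near_eq_derive.
  apply/nbhs_ballP; exists eps => // x /=.
  rewrite -ball_normE /= sub0r normrN => hx.
  by rewrite derive1E; have [_ ->] := D1 x hx.
have fA2 (X : 'M[R]_(m, n)) : frob X (A2 X) = (1 - beta) * frob X X.
  rewrite /A2 /= !frobE mulr_sumr; apply: eq_bigr => i _; rewrite mulr_sumr.
  by apply: eq_bigr => j _; rewrite !mxE mulrCA.
have : 0 <= frob W (A W) - frob W (A2 W).
  apply: (@scalarS _ (fun t => fobj A (A Ms) (g t) - fobj A2 (A2 Ms) (g t))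
    (fun t => H1 A Ms g t - H1 A2 Ms g t) eps _ e0).
  - move=> t ht; have [d v] := is_deriveBf (D1 t ht) (D2 t ht).
    by split; [exact: d | exact: v].
  - by rewrite (H1_0 hS g0) (H1_0 hS2 g0) subrr.
  - move=> t ht; rewrite -subr_ge0 g0.
    have i1 := fobj_incr hA hS Ms (g t); have i2 := fobj_incr hA2 hS2 Ms (g t).
    have [rk _ _ _] := Hg t ht; have [r1 _] := hRPD _ rk.
    rewrite fA2 in i2.
    move: i1 i2 r1; set a1 := fobj A _ _; set a2 := fobj A _ Ms; set a3 := fobj A2 _ _;
      set a4 := fobj A2 _ Ms; set q := frob _ (A _); set p := frob _ _.
    move=> i1 i2 r1.
    have -> : a1 - a3 - (a2 - a4) = (a1 - a2) - (a3 - a4) by ring.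
    rewrite i1 i2; lra.
rewrite fA2; lra.
Qed.
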